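(* Let $N \geq 5$ be an integer. For an integer $M$ with $0 \leq M \leq \binom{N}{2}$, the pair $(N,M)$ is non-feasible for the family of all line graphs if and only if $M$ belongs to one of the intervals \[\left[ \binom{N-t}{2} +\binom{t+2}{2}, \ \binom{N-t+1}{2}-1 \right] \quad \text{for some integer } t \text{ with } 1 \leq t < \frac{ -5 + \sqrt{8N +17}}{2}.\] (Thus the largest such $t$ is $\left\lfloor \frac{ -5 + \sqrt{8N +17}}{2} \right\rfloor$ if $\frac{ -5 + \sqrt{8N +17}}{2}$ is not an integer, and $\frac{ -5 + \sqrt{8N +17}}{2}-1$ if it is an integer.)
   Context: All graphs are finite and simple. For a graph $G$, $L(G)$ denotes its line graph. For integers $N\ge 1$ and $0 \le M \le \binom{N}{2}$, the pair $(N,M)$ is called feasible (for the family of all line graphs) if there exists a graph $G$ such that $L(G)$ has exactly $N$ vertices and exactly $M$ edges; otherwise $(N,M)$ is non-feasible. For integers $a \le b$, $[a,b]$ denotes the set of integers $p$ with $a \le p \le b$. *)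

(* Defs.v *)
From mathcomp Require Import all_boot.
From Stdlib Require Import Reals.

Set Implicit Arguments.
Unset Strict Implicit.
Unset Printing Implicit Defensive.

Definition simple_edges (n : nat) (E : {set {set 'I_n}}) : Prop :=
  forall e, e \in E -> #|e| = 2.

Definition line_graph_edges (n : nat) (E : {set {set 'I_n}})
  : {set {set {set 'I_n}}} :=
  [set [set e; f] | e in E, f in E & (e != f) && ~~ [disjoint e & f]].

Definition feasible (N M : nat) : Prop :=
  exists (n : nat) (E : {set {set 'I_n}}),
    [/\ simple_edges E, #|E| = N & #|line_graph_edges E| = M].

(* Main.v *)
Require Import Defs.
From mathcomp Require Import all_boot.
From Stdlib Require Import Reals.
From mathcomp Require Import zify.
From Stdlib Require Import Lra Classical.

Set Implicit Arguments.
Unset Strict Implicit.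
Unset Printing Implicit Defensive.

Section Gen.
Variable n : nat.
Implicit Types (E : {set {set 'I_n}}) (e f : {set 'I_n}).

Definition deg E (u : 'I_n) := #|[set e in E | u \in e]|.

Lemma inter1 e f : #|e| = 2 -> #|f| = 2 -> e != f -> ~~ [disjoint e & f] ->
  #|e :&: f| = 1.
Proof.
move=> ce cf nef; rewrite -setI_eq0 => /set0Pn [x xef].
have h1 : 0 < #|e :&: f| by apply/card_gt0P; exists x.
have h2 : #|e :&: f| <= 2 by rewrite -ce; apply: subset_leq_card; apply: subsetIl.
suff : #|e :&: f| != 2 by lia.
apply/negP => /eqP h.
have E1 : e :&: f = e by apply/eqP; rewrite eqEcard subsetIl ce h.
have E2 : e :&: f = f by apply/eqP; rewrite eqEcard subsetIr cf h.
by move/negP: nef; apply; rewrite -E1 E2.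
Qed.

Lemma deg_formula E : simple_edges E ->
  #|line_graph_edges E| = \sum_(u : 'I_n) 'C(deg E u, 2).
Proof.
move=> sE.
have step1 : forall B, B \in line_graph_edges E ->
    \sum_(u : 'I_n) (B \subset [set e in E | u \in e] : nat) = 1.
  move=> B /imset2P [e f eE]; rewrite inE => /andP [fE /andP [nef dj]] ->.
  rewrite -(inter1 (sE _ eE) (sE _ fE) nef dj) -sum1_card [RHS]big_mkcond /=.
  apply: eq_bigr => u _; rewrite subUset !sub1set !inE eE fE /=.
  by case: (u \in e); case: (u \in f).
rewrite -sum1_card.
transitivity (\sum_(B in line_graph_edges E) \sum_(u : 'I_n) (B \subset [set e in E | u \in e] : nat)).
  by apply: eq_bigr => B hB; rewrite step1.
rewrite exchange_big /=.
apply: eq_bigr => u _.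
transitivity (\sum_(B | (B \in line_graph_edges E) && (B \subset [set e in E | u \in e])) 1).
  rewrite [RHS]big_mkcond [LHS]big_mkcond /=; apply: eq_bigr => B _.
  by case: (B \in line_graph_edges E); case: (B \subset _).
rewrite sum1_card /deg -cards_draws; apply: eq_card => B.
rewrite !inE; apply/andP/andP => [[BL Bs]|[Bs /cards2P [e [f [nef Bef]]]]].
  split => //; move: BL => /imset2P [e f eE]; rewrite inE => /andP [fE /andP [nef dj]] ->.
  by rewrite cards2 nef.
split => //; subst B; apply/imset2P; move: Bs; rewrite subUset !sub1set !inE.
move=> /andP [/andP [eE ue] /andP [fE uf]]; exists e f => //.
rewrite inE fE nef /=; by apply/negP => /disjointFr /(_ ue); rewrite uf.
Qed.

Lemma handshake E : simple_edges E -> \sum_(u : 'I_n) deg E u = 2 * #|E|.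
Proof.
move=> sE; rewrite /deg.
have -> : \sum_(u : 'I_n) #|[set e in E | u \in e]| = \sum_(u : 'I_n) \sum_(e in E) (u \in e : nat).
  apply: eq_bigr => u _; rewrite -sum1_card big_mkcond /= [RHS]big_mkcond /=.
  by apply: eq_bigr => e _; rewrite inE; case: (e \in E); case: (u \in e).
rewrite exchange_big /= -sum1_card big_distrr /=; apply: eq_bigr => e eE.
by rewrite -(sE _ eE) muln1 -sum1_card [RHS]big_mkcond.
Qed.

Lemma LG_le E : simple_edges E -> #|line_graph_edges E| <= 'C(#|E|, 2).
Proof.
move=> sE; rewrite -cards_draws; apply: subset_leq_card; apply/subsetP => B.
move=> /imset2P [e f eE]; rewrite inE => /andP [fE /andP [nef dj]] ->.
by rewrite inE subUset !sub1set eE fE cards2 nef.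
Qed.

End Gen.


Lemma bin2_2 d : 'C(d, 2) * 2 = d * (d - 1).
Proof.
elim: d => [//|d IH]; rewrite binS bin1.
nia.
Qed.

Lemma binS2 d : 'C(d.+1, 2) = 'C(d, 2) + d.
Proof. by rewrite binS bin1. Qed.

Section Gen2.
Variable n : nat.
Implicit Types (E : {set {set 'I_n}}) (e f : {set 'I_n}).

Lemma simple_sub E (F : {set {set 'I_n}}) : simple_edges E -> F \subset E -> simple_edges F.
Proof. by move=> sE /subsetP sF e /sF /sE. Qed.

Lemma bound_max E D : simple_edges E -> (forall u, deg E u <= D) ->
  #|line_graph_edges E| <= #|E| * (D - 1).
Proof.
move=> sE hD.
suff : #|line_graph_edges E| * 2 <= #|E| * (D - 1) * 2 by lia.
rewrite deg_formula // big_distrl /=.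
have -> : #|E| * (D - 1) * 2 = (\sum_(u : 'I_n) deg E u) * (D - 1).
  rewrite handshake //; lia.
rewrite big_distrl /=; apply: leq_sum => u _; rewrite bin2_2.
by apply: leq_mul => //; apply: leq_sub2r.
Qed.

Lemma bound_star E v : simple_edges E ->
  #|line_graph_edges E| <=
    'C(deg E v, 2) + 'C(#|E| - deg E v, 2) + 2 * (#|E| - deg E v).
Proof.
move=> sE.
set H := [set e in E | v \notin e].
have sH : simple_edges H by apply: (simple_sub sE); apply/subsetP => e; rewrite inE => /andP [].
have cH : #|H| = #|E| - deg E v.
  rewrite /deg -(cardsID [set e : {set 'I_n} | v \in e] E).
  have -> : E :&: [set e : {set 'I_n} | v \in e] = [set e in E | v \in e].
    by apply/setP => e; rewrite !inE.
  have -> : E :\: [set e : {set 'I_n} | v \in e] = H.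
    by apply/setP => e; rewrite !inE andbC.
  by rewrite addKn.
have hu : forall u, u != v -> deg E u <= deg H u + 1.
  move=> u nuv.
  have sub : [set e in E | u \in e] \subset [set e in H | u \in e] :|: [set [set u; v]].
    apply/subsetP => e; rewrite !inE => /andP [eE ue].
    case ve: (v \in e); last by rewrite eE ue.
    apply/orP; right; apply/eqP/esym/eqP; rewrite eqEcard (sE _ eE) cards2 nuv andbT.
    by rewrite subUset !sub1set ue ve.
  apply: leq_trans (subset_leq_card sub) _.
  by rewrite /deg; apply: leq_trans (leq_card_setU _ _) _; rewrite cards1.
rewrite deg_formula // (bigD1 v) //= -addnA leq_add2l -cH.
apply: (@leq_trans (\sum_(u | u != v) ('C(deg H u, 2) + deg H u))).
  apply: leq_sum => u nuv.
  apply: leq_trans (leq_bin2l _ (hu u nuv)) _.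
  by rewrite addn1 binS2.
apply: (@leq_trans (\sum_u ('C(deg H u, 2) + deg H u))).
  by rewrite [X in _ <= X](bigD1 v) //=; apply: leq_addl.
rewrite big_split /= handshake // -deg_formula //.
by rewrite leq_add2r; apply: LG_le.
Qed.

End Gen2.


Lemma p1 a m : (a+1)*(a+1) + 5*(a+1) + 2 < 2 * (a + 2 + m) ->
  (a + 2 + m) * (a + 1) * 2 < (m + 1) * m + (a + 3) * (a + 2).
Proof. move=> h. nia. Qed.
Lemma p2 a p q : (a + 3 + q) * (a + 2 + q) + (a + 1 + p) * (a + p) + 4 * (a + 1 + p) <
   (a + 3 + q + p) * (a + 2 + q + p) + (a + 3) * (a + 2).
Proof. nia. Qed.

Lemma arith1 N M t D : 1 <= t -> t * t + 5 * t + 2 < 2 * N ->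
  'C(N - t, 2) + 'C(t + 2, 2) <= M -> M <= 'C(N - t + 1, 2) - 1 ->
  D <= N -> 'C(D, 2) <= M ->
  M <= 'C(D, 2) + 'C(N - D, 2) + 2 * (N - D) -> M <= N * (D - 1) -> False.
Proof.
move=> t1 ht hL hU hDN hCD hB1 hB2.
have hB3 : 3 <= 'C(t + 2, 2).
  rewrite -(leq_pmul2r (_ : 0 < 2)) // bin2_2.
  have -> : t + 2 - 1 = t + 1 by lia.
  nia.
have hDt : D <= N - t.
  rewrite leqNgt; apply/negP => lt.
  have := leq_bin2l 2 lt; rewrite -addn1 => h; lia.
case: t t1 ht hL hU hDt hB3 => [//|a] _ ht hL hU hDt _.
have [hD|hD] := leqP D (a.+2).
  have [m hN] : exists m, N = a.+1 + m by exists (N - a.+1); lia.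
  subst N.
  rewrite addKn in hL.
  have hm1 : 1 <= m by nia.
  have [m' hm'] : exists m', m = m'.+1 by exists m.-1; lia.
  subst m.
  have e2 : 'C(a.+1 + 2, 2) * 2 = (a + 3) * (a + 2).
    rewrite bin2_2; have -> : a.+1 + 2 - 1 = a + 2 by lia. by rewrite addn2 addn3.
  have e1 : 'C(m'.+1, 2) * 2 = (m' + 1) * m'.
    by rewrite bin2_2 subn1 /= addn1.
  have hM : M <= (a + 2 + m') * (a + 1).
    apply: leq_trans hB2 _.
    have -> : a.+1 + m'.+1 = a + 2 + m' by lia.
    by apply: leq_mul => //; lia.
  have ht' : (a+1)*(a+1) + 5*(a+1) + 2 < 2 * (a + 2 + m').
    have -> : a + 2 + m' = a.+1 + m'.+1 by lia.
    by rewrite !addn1.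
  have := p1 ht'. lia.
have [p hp] : exists p, N - D = a.+1 + p by exists (N - D - a.+1); lia.
have [q hq] : exists q, D = a.+3 + q by exists (D - a.+3); lia.
have hN : N = a.+1 + p + a.+3 + q by lia.
rewrite hp in hB1.
subst N D.
have eN : a.+1 + p + a.+3 + q - a.+1 = a + 3 + q + p by lia.
rewrite eN in hL.
have e1 : 'C(a + 3 + q + p, 2) * 2 = (a + 3 + q + p) * (a + 2 + q + p).
  rewrite bin2_2; congr (_ * _); lia.
have e2 : 'C(a.+1 + 2, 2) * 2 = (a + 3) * (a + 2).
  rewrite bin2_2; congr (_ * _); lia.
have e3 : 'C(a.+3 + q, 2) * 2 = (a + 3 + q) * (a + 2 + q).
  rewrite bin2_2; congr (_ * _); lia.
have e4 : 'C(a.+1 + p, 2) * 2 = (a + 1 + p) * (a + p).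
  rewrite bin2_2; congr (_ * _); lia.
have := p2 a p q. lia.
Qed.


Lemma infeasible N M t : 5 <= N -> 1 <= t -> t * t + 5 * t + 2 < 2 * N ->
  'C(N - t, 2) + 'C(t + 2, 2) <= M <= 'C(N - t + 1, 2) - 1 -> ~ feasible N M.
Proof.
move=> N5 t1 ht /andP [hL hU] [n [E [sE cE cM]]].
have [e eE] : exists e, e \in E.
  by apply/card_gt0P; rewrite cE; lia.
have [u0 _] : exists u0, u0 \in e.
  by apply/card_gt0P; rewrite (sE _ eE).
have [v _ vmax] := @arg_maxnP _ u0 xpredT (deg E) isT.
apply: (@arith1 N M t (deg E v)) => //.
- rewrite -cE; apply: subset_leq_card; apply/subsetP => x; rewrite inE => /andP [].
  by [].
- by rewrite -cM deg_formula // (bigD1 v) //= leq_addr.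
- by rewrite -cM -cE; apply: bound_star.
- by rewrite -cM -cE; apply: bound_max => // u; apply: vmax.
Qed.


Lemma INR_addn a b : INR (a + b) = (INR a + INR b)%R.
Proof. by rewrite -plusE plus_INR. Qed.
Lemma INR_muln a b : INR (a * b) = (INR a * INR b)%R.
Proof. by rewrite -multE mult_INR. Qed.

Lemma INR_ltn a b : (INR a < INR b)%R <-> a < b.
Proof.
split => [h|h]; first by apply/ltP; apply: INR_lt.
by apply: lt_INR; apply/ltP.
Qed.

Lemma real_cond N t :
  (INR t < (-5 + sqrt (INR (8 * N + 17))) / 2)%R <-> t * t + 5 * t + 2 < 2 * N.
Proof.
have eA : INR (2 * t + 5) = (2 * INR t + 5)%R.
  rewrite INR_addn INR_muln; simpl; ring.
have nn : (0 <= INR (2 * t + 5))%R by apply: pos_INR.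
have nK : (0 <= INR (8 * N + 17))%R by apply: pos_INR.
have step : (INR t < (-5 + sqrt (INR (8 * N + 17))) / 2)%R <->
            (INR ((2 * t + 5) * (2 * t + 5)) < INR (8 * N + 17))%R.
  rewrite INR_muln; split => h.
    apply: sqrt_lt_0_alt; rewrite sqrt_square //; lra.
  have := sqrt_lt_1_alt _ _ (conj (Rle_0_sqr _) h).
  rewrite sqrt_square //; lra.
rewrite step INR_ltn; lia.
Qed.


Section ListG.
Variable n : nat.

Definition mkE (p : nat * nat) : {set 'I_n.+1} := [set inord p.1; inord p.2].

Definition okp (p : nat * nat) := (p.1 < p.2) && (p.2 < n.+1).

Lemma mem_mkE p (u : 'I_n.+1) : okp p ->
  (u \in mkE p) = (p.1 == u) || (p.2 == u).
Proof.
case/andP => h1 h2; rewrite !inE -!val_eqE /= !inordK //; last by lia.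
by rewrite !(eq_sym (nat_of_ord u)).
Qed.

Lemma mkE_inj p q : okp p -> okp q -> mkE p = mkE q -> p = q.
Proof.
move=> hp hq E.
have hp1 : forall x, (p.1 == x) || (p.2 == x) = (q.1 == x) || (q.2 == x).
  move=> x; case: (ltnP x n.+1) => hx.
    by rewrite -(mem_mkE (Ordinal hx) hp) -(mem_mkE (Ordinal hx) hq) E.
  move: hp hq; rewrite /okp => /andP [a b] /andP [c d].
  have -> : (p.1 == x) = false by apply/eqP; lia.
  have -> : (p.2 == x) = false by apply/eqP; lia.
  have -> : (q.1 == x) = false by apply/eqP; lia.
  by have -> : (q.2 == x) = false by apply/eqP; lia.
clear E; move: hp hq hp1; case: p => a b; case: q => c d.
rewrite /okp /= => /andP [ab _] /andP [cd _] hx.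
have h1 : (c == a) || (d == a) by rewrite -hx eqxx.
have h2 : (c == b) || (d == b) by rewrite -hx eqxx orbT.
have h3 : (a == c) || (b == c) by rewrite hx eqxx.
case/orP: h1 => /eqP h1; case/orP: h2 => /eqP h2; case/orP: h3 => /eqP h3;
  (have [-> ->] : a = c /\ b = d by lia); by [].
Qed.

Lemma list_feasible (l : seq (nat * nat)) : all okp l -> uniq l ->
  feasible (size l) (\sum_(u < n.+1) 'C(count (fun p : nat * nat => (p.1 == u :> nat) || (p.2 == u :> nat)) l, 2)).
Proof.
move=> /allP okl ul.
have inj : {in l &, injective mkE} by move=> p q /okl hp /okl hq; apply: mkE_inj.
have um : uniq (map mkE l) by rewrite map_inj_in_uniq.
exists n.+1, [set:: map mkE l]; split.
- move=> e; rewrite inE => /mapP [p /okl hp ->].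
  rewrite cards2; case/andP: hp => h1 h2.
  by rewrite -val_eqE /= !inordK //; [case: eqP => //=; lia | lia].
- by rewrite cardsE; move/card_uniqP: um => ->; rewrite size_map.
- rewrite deg_formula; last first.
    move=> e; rewrite inE => /mapP [p /okl hp ->].
    rewrite cards2; case/andP: hp => h1 h2.
    by rewrite -val_eqE /= !inordK //; [case: eqP => //=; lia | lia].
  apply: eq_bigr => u _; congr 'C(_, 2).
  rewrite /deg.
  have -> : [set e in [set:: map mkE l] | u \in e] = [set:: filter (fun e : {set 'I_n.+1} => u \in e) (map mkE l)].
    by apply/setP => e; rewrite !inE mem_filter andbC.
  rewrite cardsE; move/card_uniqP: (filter_uniq (fun e : {set 'I_n.+1} => u \in e) um) => ->.
  rewrite size_filter count_map; apply: eq_in_count => p /okl hp /=.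
  by rewrite mem_mkE.
Qed.

End ListG.


Lemma count_star c w m len :
  count (fun u => (c == w) || (u == w)) (iota m len) =
  if c == w then len else (m <= w < m + len).
Proof.
case: eqP => _ /=.
  by rewrite (eq_count (a2 := predT)) ?count_predT ?size_iota.
by rewrite -mem_iota -(count_uniq_mem w (iota_uniq m len)); apply: eq_count => u; rewrite /= eq_sym.
Qed.

Lemma count_match b w r :
  count (fun i => (b + 2 * i == w) || (b + 2 * i + 1 == w)) (iota 0 r) =
  (b <= w < b + 2 * r).
Proof.
elim: r => [|r IH]; first by rewrite /=; lia.
rewrite -[r.+1]addn1 iotaD count_cat IH /= add0n.
case: (b + 2 * r =P w) => h1; case: (b + 2 * r + 1 =P w) => h2 /=; lia.
Qed.

Lemma bin2_small x : x <= 1 -> 'C(x, 2) = 0.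
Proof. by case: x => [|[|]]. Qed.

Lemma construct D k j r : 1 <= D -> j <= k -> j < D ->
  feasible (D + k + r) ('C(D, 2) + 'C(k + 1, 2) + j).
Proof.
move=> D1 jk jD.
set a := D - j + 1.
set b := D + k - j + 1.
set l1 := [seq (0, u) | u <- iota 1 D].
set l2 := [seq (1, u) | u <- iota a k].
set l3 := [seq (b + 2 * i, b + 2 * i + 1) | i <- iota 0 r].
have ok : all (okp (b + 2 * r)) (l1 ++ l2 ++ l3).
  rewrite !all_cat; apply/and3P; split; apply/allP => p /mapP [u];
    rewrite mem_iota /okp => hu -> /=; lia.
have un : uniq (l1 ++ l2 ++ l3).
  rewrite !cat_uniq !map_inj_uniq ?iota_uniq //=; last first.
  - by move=> x y [] ->.
  - by move=> x y [] ->.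
  - by move=> x y [] h _; lia.
  rewrite andbT; apply/andP; split.
    apply/hasPn => p; rewrite mem_cat => /orP [] /mapP [u _ ->];
      by apply/negP => /mapP [v _] [] /=; lia.
  apply/hasPn => p /mapP [u _ ->]; apply/negP => /mapP [v _] [] /=; lia.
have := list_feasible ok un.
rewrite !size_cat !size_map !size_iota addnA.
have hc : forall w : nat,
  count (fun p : nat * nat => (p.1 == w) || (p.2 == w)) (l1 ++ l2 ++ l3) =
  (if 0 == w then D else (1 <= w < 1 + D)) + (if 1 == w then k else (a <= w < a + k))
  + (b <= w < b + 2 * r).
  move=> w; rewrite !count_cat !count_map -count_star -count_star -count_match addnA.
  by [].
have hg : forall w : nat, 'C(count (fun p : nat * nat => (p.1 == w) || (p.2 == w)) (l1 ++ l2 ++ l3), 2) =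
   if w == 0 then 'C(D, 2) else if w == 1 then 'C(k + 1, 2) else (a <= w <= D).
  move=> w; rewrite hc.
  case: (w =P 0) => [->|w0] /=.
    have -> : (a <= 0 < a + k) = false by rewrite /a; lia.
    have -> : (b <= 0 < b + 2 * r) = false by rewrite /b; lia.
    by rewrite !addn0.
  case: (w =P 1) => [->|w1] /=.
    have -> : (b <= 1 < b + 2 * r) = false by rewrite /b; lia.
    by congr 'C(_, 2); lia.
  have -> : (0 == w) = false by apply/eqP; lia.
  have -> : (1 == w) = false by apply/eqP; lia.
  case h : (a <= w <= D).
    set x := _ + _ + _.
    have -> : x = 2 by rewrite /x /a /b in h *; lia.
    by [].
  apply: bin2_small; rewrite /a /b in h *; lia.
set g := fun w : nat => if w == 0 then 'C(D, 2) else if w == 1 then 'C(k + 1, 2) else (a <= w <= D) : nat.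
rewrite (eq_bigr (fun u : 'I_(b + 2 * r).+1 => g u)); last by move=> u _; rewrite hg.
suff -> : \sum_(u < (b + 2 * r).+1) g u = 'C(D, 2) + 'C(k + 1, 2) + j by [].
rewrite -(big_mkord xpredT g) big_ltn // big_ltn; last by rewrite /b; lia.
rewrite /= {1 2}/g /= addnA; congr (_ + _).
rewrite (@big_cat_nat _ _ _ a) /=; [|rewrite /a; lia|rewrite /a /b; lia].
rewrite (@big_cat_nat _ _ _ D.+1 a) /=; [|rewrite /a; lia|rewrite /a /b; lia].
rewrite (@eq_big_nat _ _ _ 2 a _ (fun _ => 0)); last first.
  move=> i hi; rewrite /g; have -> : (i == 0) = false by apply/eqP; lia.
  have -> : (i == 1) = false by apply/eqP; lia. rewrite /a in hi *; lia.
rewrite (@eq_big_nat _ _ _ a D.+1 _ (fun _ => 1)); last first.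
  move=> i hi; rewrite /g; have -> : (i == 0) = false by apply/eqP; rewrite /a in hi; lia.
  have -> : (i == 1) = false by apply/eqP; rewrite /a in hi; lia. rewrite /a in hi *; lia.
rewrite (@eq_big_nat _ _ _ D.+1 _ _ (fun _ => 0)); last first.
  move=> i hi; rewrite /g; have -> : (i == 0) = false by apply/eqP; lia.
  have -> : (i == 1) = false by apply/eqP; lia. lia.
rewrite !sum_nat_const_nat /a; lia.
Qed.


Lemma choose_D N M : 1 <= N -> M <= 'C(N, 2) ->
  exists D, [/\ 1 <= D <= N, 'C(D, 2) <= M & (D = N \/ M < 'C(D + 1, 2))].
Proof.
case: N => [//|N] _; elim: N M => [|N IH] M hM.
  by exists 1; split => //; left.
have [h|h] := leqP M 'C(N.+1, 2).
  have [D [hD1 hD2 hD3]] := IH M h.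
  exists D; split => //; first lia.
  right; case: hD3 => [->|//]; rewrite addn1 binS2; lia.
have [h2|h2] := ltnP M 'C(N.+2, 2).
  by exists N.+1; split => //; [lia | lia | right; rewrite addn1].
exists N.+2; split; [lia | lia | by left].
Qed.

Lemma choose_k s x : x < 'C(s + 2, 2) ->
  exists k j, [/\ k <= s, j <= k, j <= x & x = 'C(k + 1, 2) + j].
Proof.
elim: s x => [|s IH] x hx.
  move: hx; rewrite add0n binn => hx; have -> : x = 0 by lia. by exists 0, 0.
have [h|h] := ltnP x 'C(s + 2, 2).
  have [k [j [h1 h2 h3 h4]]] := IH x h.
  by exists k, j; split => //; lia.
exists s.+1, (x - 'C(s + 2, 2)); split => //; try lia.
  move: hx; rewrite (_ : s.+1 + 2 = (s + 2).+1); last by lia.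
  rewrite binS2; lia.
rewrite (_ : s.+1 + 1 = s + 2); last by lia.
lia.
Qed.

Lemma feasible_main N M : 5 <= N -> M <= 'C(N, 2) ->
  (forall t, 1 <= t -> t * t + 5 * t + 2 < 2 * N ->
     ~ ('C(N - t, 2) + 'C(t + 2, 2) <= M <= 'C(N - t + 1, 2) - 1)) ->
  feasible N M.
Proof.
move=> N5 hM hno.
have N1 : 1 <= N by lia.
have [D [/andP [D1 DN] hCD hD]] := choose_D N1 hM.
set s := N - D.
set x := M - 'C(D, 2).
have hx : x < 'C(s + 2, 2).
  case: hD => [eD|lt].
    have eM : M = 'C(D, 2) by apply/eqP; rewrite eqn_leq hCD andbT eD.
    rewrite /x /s eM subnn eD subnn; by [].
  have xD : x < D by move: lt; rewrite addn1 binS2 /x; lia.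
  have e2 := bin2_2 (s + 2).
  have [hs|hs] := leqP (2 * N) (s * s + 5 * s + 2).
    have : D <= 'C(s + 2, 2).
      have : D * 2 <= 'C(s + 2, 2) * 2.
        rewrite e2 (_ : s + 2 - 1 = s + 1); last by lia.
        rewrite /s in hs *; nia.
      lia.
    lia.
  have [DltN|DgeN] := ltnP D N; last first.
    have eD : D = N by lia.
    have eM : M = 'C(D, 2) by apply/eqP; rewrite eqn_leq hCD andbT eD.
    by rewrite /x /s eM subnn eD subnn.
  have s1 : 1 <= s by rewrite /s; lia.
  have := hno s s1 hs.
  rewrite (_ : N - s = D); last by rewrite /s; lia.
  have hU : M <= 'C(D + 1, 2) - 1 by lia.
  rewrite hU andbT => /negP; rewrite -ltnNge /x; lia.
have [k [j [ks jk jx ex]]] := choose_k hx.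
have jD : j < D.
  case: hD => [eD|lt].
    have eM : M = 'C(D, 2) by apply/eqP; rewrite eqn_leq hCD andbT eD.
    have : x = 0 by rewrite /x eM subnn.
    lia.
  have : x < D by move: lt; rewrite addn1 binS2 /x; lia.
  lia.
have := construct (s - k) D1 jk jD.
rewrite (_ : D + k + (s - k) = N); last by rewrite /s; lia.
by rewrite -addnA -ex /x subnKC.
Qed.


Theorem theorem1 (N M : nat) :
  5 <= N -> M <= 'C(N, 2) ->
  (~ feasible N M <->
   exists t : nat,
     [/\ 1 <= t,
         (INR t < (-5 + sqrt (INR (8 * N + 17))) / 2)%R
       & 'C(N - t, 2) + 'C(t + 2, 2) <= M <= 'C(N - t + 1, 2) - 1]).
Proof.
move=> N5 hM; split.
- move=> nf; apply: NNPP => hno; apply: nf; apply: feasible_main => // t t1 ht hI.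
  apply: hno; exists t; split => //; exact: (proj2 (real_cond N t) ht).
- case=> t [t1 hr hI]; apply: (infeasible N5 t1 _ hI); exact: (proj1 (real_cond N t) hr).
Qed.
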